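(* For every $n\ge1$, every $c\in\mathbb{Q}$, every $w\in\mathfrak{H}$ and every $u\in\{x,y\}$, $$\partial_n^{(c)}(wu)=\partial_n^{(c)}(w)\,u+\mathrm{sgn}(u)\,\phi_{n-1}^{(c)}(wx)\,y,$$ i.e. $[\partial_n^{(c)},R_u]=\mathrm{sgn}(u)\,R_y\phi_{n-1}^{(c)}R_x$. Consequently $\partial_n^{(c)}R_z=R_z\partial_n^{(c)}$.
   Context: Let $\mathfrak{H}=\mathbb{Q}\langle x,y\rangle$, $z=x+y$, $\mathrm{sgn}(x)=1$, $\mathrm{sgn}(y)=-1$. Products of operators denote composition, $[A,B]=AB-BA$, $\mathrm{ad}(A)(B)=[A,B]$; $R_w(w')=w'w$. $H$ is the $\mathbb{Q}$-linear map with $H(w)=\deg(w)w$ for words $w$. $\partial_1$ is the derivation with $\partial_1(x)=xy$, $\partial_1(y)=-xy$. For $c\in\mathbb{Q}$, $\theta^{(c)}$ is the unique $\mathbb{Q}$-linear map with $\theta^{(c)}(x)=\frac12(xz+zx)$, $\theta^{(c)}(y)=\frac12(yz+zy)$ and $\theta^{(c)}(ww')=\theta^{(c)}(w)w'+w\theta^{(c)}(w')+c\,\partial_1(w)H(w')$; $\partial_n^{(c)}=\frac{1}{(n-1)!}\mathrm{ad}(\theta^{(c)})^{n-1}(\partial_1)$. The operators $\phi_n^{(c)}$ are defined by $\phi_0^{(c)}=\mathrm{id}$ and $\phi_n^{(c)}=\frac1n\bigl([\theta^{(c)},\phi_{n-1}^{(c)}]+\frac12(R_z\phi_{n-1}^{(c)}+\phi_{n-1}^{(c)}R_z)+c\,\partial_1\phi_{n-1}^{(c)}\bigr)$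 for $n\ge1$. *)

(* Defs.v *)
(* The free noncommutative algebra H = Q<x,y> is modelled
   by formal finite sums of words: an element is a list of (coefficient, word)
   pairs, denoting the sum of coef * word.  Two representations denote the
   same element of H iff all their coefficients agree ([nceq]).  Every
   operator below is defined on words and extended linearly ([ext]), so it is
   well defined on H. *)
From HB Require Import structures.
From mathcomp Require Import all_boot all_order all_algebra.
Set Implicit Arguments. Unset Strict Implicit. Unset Printing Implicit Defensive.
Import GRing.Theory Num.Theory.
Local Open Scope ring_scope.

(* letters: true = x, false = y *)
Definition word := seq bool.
Definition ncpoly := seq (rat * word).

Definition ncoef (p : ncpoly) (v : word) : rat := \sum_(t <- p | t.2 == v) t.1.
Definition nceq (p q : ncpoly) : Prop := forall v, ncoef p v = ncoef q v.

Definition ncscale (a : rat) (p : ncpoly) : ncpoly := [seq (a * t.1, t.2) | t <- p].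
Definition ncadd (p q : ncpoly) : ncpoly := p ++ q.
Definition ncmul (p q : ncpoly) : ncpoly :=
  [seq (s.1 * t.1, s.2 ++ t.2) | s <- p, t <- q].
Definition ncw (w : word) : ncpoly := [:: (1, w)].

Definition ext (f : word -> ncpoly) (p : ncpoly) : ncpoly :=
  flatten [seq ncscale t.1 (f t.2) | t <- p].

Definition sgn (u : bool) : rat := if u then 1 else -1.

Definition op := ncpoly -> ncpoly.
Definition opadd (A B : op) : op := fun p => ncadd (A p) (B p).
Definition opsub (A B : op) : op := fun p => ncadd (A p) (ncscale (-1) (B p)).
Definition opscale (a : rat) (A : op) : op := fun p => ncscale a (A p).
Definition opcomp (A B : op) : op := fun p => A (B p).
Definition ad (A B : op) : op := opsub (opcomp A B) (opcomp B A).

Definition Rw (v : word) : op := ext (fun w => ncw (w ++ v)).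
Definition Rz : op := opadd (Rw [:: true]) (Rw [:: false]).

Definition Hop : op := ext (fun w => ncscale (size w)%:R (ncw w)).

(* partial_1 : derivation with x |-> xy, y |-> -xy *)
Definition d1_letter (a : bool) : ncpoly := ncscale (sgn a) (ncw [:: true; false]).
Fixpoint d1_word (w : word) : ncpoly :=
  match w with
  | [::] => [::]
  | a :: w' => ncadd (ncmul (d1_letter a) (ncw w')) (ncmul (ncw [:: a]) (d1_word w'))
  end.
Definition d1 : op := ext d1_word.

(* theta^(c): theta(a) = (a z + z a)/2 on letters, and
   theta(a w') = theta(a) w' + a theta(w') + c d1(a) H(w') *)
Definition theta_letter (a : bool) : ncpoly :=
  ncscale (1 / 2%:R)
    [:: (1, [:: a; true]); (1, [:: a; false]); (1, [:: true; a]); (1, [:: false; a])].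
Fixpoint theta_word (c : rat) (w : word) : ncpoly :=
  match w with
  | [::] => [::]
  | a :: w' =>
      ncadd (ncmul (theta_letter a) (ncw w'))
        (ncadd (ncmul (ncw [:: a]) (theta_word c w'))
               (ncscale c (ncmul (d1_letter a) (Hop (ncw w')))))
  end.
Definition theta (c : rat) : op := ext (theta_word c).

Definition dn (c : rat) (n : nat) : op :=
  opscale (1 / (n.-1)`!%:R) (iter n.-1 (ad (theta c)) d1).

Fixpoint phi (c : rat) (n : nat) : op :=
  match n with
  | 0 => fun p => p
  | n'.+1 =>
      opscale (1 / n'.+1%:R)
        (opadd (ad (theta c) (phi c n'))
          (opadd (opscale (1 / 2%:R) (opadd (opcomp Rz (phi c n')) (opcomp (phi c n') Rz)))
                 (opscale c (opcomp d1 (phi c n')))))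
  end.

(* Main.v *)
Require Import Defs.
From HB Require Import structures.
From mathcomp Require Import all_boot all_order all_algebra.
From Stdlib Require Import Ring Setoid Morphisms.
Set Implicit Arguments. Unset Strict Implicit. Unset Printing Implicit Defensive.
Import GRing.Theory Num.Theory.
Local Open Scope ring_scope.

Definition radd (x y : rat) : rat := x + y.
Definition rmul (x y : rat) : rat := x * y.
Definition ropp (x : rat) : rat := - x.
Definition rzero : rat := 0.
Definition rone : rat := 1.
Lemma rat_rt : ring_theory rzero rone radd rmul
  (fun x y => radd x (ropp y)) ropp (@eq rat).
Proof.
rewrite /radd /rmul /ropp /rzero /rone.
split=> *; rewrite ?add0r ?mul1r ?mulrDl ?subrr //.
- by rewrite addrC. - by rewrite addrA. - by rewrite mulrC. - by rewrite mulrA.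
Qed.
Add Ring ratring : rat_rt.
Lemma raddE (x y : rat) : x + y = radd x y. Proof. by []. Qed.
Lemma rmulE (x y : rat) : x * y = rmul x y. Proof. by []. Qed.
Lemma roppE (x : rat) : - x = ropp x. Proof. by []. Qed.
Lemma rzeroE : (0 : rat) = rzero. Proof. by []. Qed.
Lemma roneE : (1 : rat) = rone. Proof. by []. Qed.
Definition rinv (x : rat) : rat := x^-1.
Lemma rinvE (x : rat) : x^-1 = rinv x. Proof. by []. Qed.
Ltac qring := rewrite ?rinvE ?raddE ?rmulE ?roppE ?rzeroE ?roneE;
  match goal with |- ?a = ?b => change (@eq rat a b) end; ring.


Lemma ncoef_nil v : ncoef [::] v = 0.
Proof. by rewrite /ncoef big_nil. Qed.
Lemma ncoef_cons t p v : ncoef (t :: p) v = (if t.2 == v then t.1 else 0) + ncoef p v.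
Proof. by rewrite /ncoef big_cons; case: ifP; rewrite ?add0r. Qed.
Lemma ncoef_cat p q v : ncoef (p ++ q) v = ncoef p v + ncoef q v.
Proof. by rewrite /ncoef big_cat. Qed.
Lemma ncoef_add p q v : ncoef (ncadd p q) v = ncoef p v + ncoef q v.
Proof. exact: ncoef_cat. Qed.
Lemma ncoef_scale a p v : ncoef (ncscale a p) v = a * ncoef p v.
Proof.
elim: p => [|t p IH]; first by rewrite /ncscale /= !ncoef_nil mulr0.
rewrite /ncscale /= !ncoef_cons -/(ncscale a p) IH /= mulrDr.
by case: ifP; rewrite ?mulr0.
Qed.
Lemma ncoef_ncw w v : ncoef (ncw w) v = if w == v then 1 else 0.
Proof. by rewrite /ncw ncoef_cons ncoef_nil addr0. Qed.

Lemma ncoef_ext f p v :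
  ncoef (ext f p) v = \sum_(t <- p) t.1 * ncoef (f t.2) v.
Proof.
elim: p => [|t p IH]; first by rewrite /ext /= ncoef_nil big_nil.
by rewrite /ext /= ncoef_cat -/(ext f p) IH big_cons ncoef_scale.
Qed.

Lemma lin_sum (g : word -> rat) p (L : seq word) :
  uniq L -> {subset map snd p <= L} ->
  \sum_(t <- p) t.1 * g t.2 = \sum_(w <- L) ncoef p w * g w.
Proof.
move=> uL; elim: p => [|t p IH] sub.
  by rewrite big_nil big1 // => w _; rewrite ncoef_nil mul0r.
rewrite big_cons IH; last by move=> w hw; apply: sub; rewrite /= inE hw orbT.
have tL : t.2 \in L by apply: sub; rewrite /= inE eqxx.
under [RHS]eq_bigr => w _ do rewrite ncoef_cons mulrDl.
rewrite big_split /=; congr (_ + _).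
rewrite (bigD1_seq t.2) //= eqxx big1 ?addr0 // => w; rewrite eq_sym => /negbTE ->.
by rewrite mul0r.
Qed.

Lemma lin_sum_eq (g : word -> rat) p q :
  nceq p q -> \sum_(t <- p) t.1 * g t.2 = \sum_(t <- q) t.1 * g t.2.
Proof.
move=> e.
set L := undup (map snd p ++ map snd q).
have uL : uniq L by rewrite undup_uniq.
rewrite (@lin_sum g p L) //; last by move=> w h; rewrite mem_undup mem_cat h.
rewrite (@lin_sum g q L) //; last by move=> w h; rewrite mem_undup mem_cat h orbT.
by apply: eq_bigr => w _; rewrite e.
Qed.

Lemma nceq_refl p : nceq p p. Proof. by []. Qed.
Lemma nceq_sym p q : nceq p q -> nceq q p. Proof. by move=> h v; rewrite h. Qed.
Lemma nceq_trans p q r : nceq p q -> nceq q r -> nceq p r.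
Proof. by move=> h1 h2 v; rewrite h1 h2. Qed.

Definition good (A : op) :=
  [/\ forall p q, nceq p q -> nceq (A p) (A q),
      forall p q, nceq (A (ncadd p q)) (ncadd (A p) (A q)) &
      forall a p, nceq (A (ncscale a p)) (ncscale a (A p))].

Lemma good_ext f : good (ext f).
Proof.
split.
- by move=> p q e v; rewrite !ncoef_ext (lin_sum_eq (fun w => ncoef (f w) v) e).
- by move=> p q v; rewrite /ext /ncadd map_cat flatten_cat.
- move=> a p v; rewrite ncoef_scale !ncoef_ext big_distrr /=.
  rewrite /ncscale big_map; apply: eq_bigr => t _ /=; by rewrite mulrA.
Qed.

Lemma goodE A p q v : good A -> nceq p q -> ncoef (A p) v = ncoef (A q) v.
Proof. by case=> h _ _ e; rewrite (h _ _ e). Qed.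
Lemma goodD A p q v : good A -> ncoef (A (ncadd p q)) v = ncoef (A p) v + ncoef (A q) v.
Proof. by case=> _ h _; rewrite h ncoef_add. Qed.
Lemma goodZ A a p v : good A -> ncoef (A (ncscale a p)) v = a * ncoef (A p) v.
Proof. by case=> _ _ h; rewrite h ncoef_scale. Qed.

Lemma good_id : good (fun p => p).
Proof. by split. Qed.
Lemma good_add A B : good A -> good B -> good (opadd A B).
Proof.
move=> gA gB; split.
- by move=> p q e v; rewrite /opadd !ncoef_add (goodE _ gA e) (goodE _ gB e).
- move=> p q v; rewrite /opadd !ncoef_add !(goodD _ _ _ gA) !(goodD _ _ _ gB).
  by rewrite !addrA (addrAC (ncoef (A p) v)).
- by move=> a p v; rewrite /opadd ncoef_scale !ncoef_add (goodZ _ _ _ gA) (goodZ _ _ _ gB) mulrDr.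
Qed.
Lemma good_scale a A : good A -> good (opscale a A).
Proof.
move=> gA; split.
- by move=> p q e v; rewrite /opscale !ncoef_scale (goodE _ gA e).
- by move=> p q v; rewrite /opscale !ncoef_add !ncoef_scale (goodD _ _ _ gA) mulrDr.
- by move=> b p v; rewrite /opscale !ncoef_scale (goodZ _ _ _ gA) !mulrA (mulrC a).
Qed.
Lemma good_sub A B : good A -> good B -> good (opsub A B).
Proof. move=> gA gB; exact: (good_add gA (good_scale (-1) gB)). Qed.
Lemma good_comp A B : good A -> good B -> good (opcomp A B).
Proof.
move=> gA gB; split.
- by move=> p q e v; rewrite /opcomp; apply: goodE => //; case: gB => h _ _; apply: h.
- move=> p q v; rewrite /opcomp ncoef_add -!(goodD _ _ _ gA).
  by apply: goodE => //; case: gB.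
- move=> a p v; rewrite /opcomp ncoef_scale -!(goodZ _ _ _ gA).
  by apply: goodE => //; case: gB.
Qed.
Lemma good_ad A B : good A -> good B -> good (ad A B).
Proof. by move=> gA gB; apply: good_sub; apply: good_comp. Qed.

Lemma nceq_single a w : nceq [:: (a, w)] (ncscale a (ncw w)).
Proof. by move=> v; rewrite ncoef_scale !ncoef_cons !ncoef_nil /=; case: (w == v); rewrite ?addr0 ?mulr1 ?mulr0. Qed.

Lemma good_words A B : good A -> good B ->
  (forall w, nceq (A (ncw w)) (B (ncw w))) -> forall p, nceq (A p) (B p).
Proof.
move=> gA gB h; elim=> [|[a w] p IH].
  have e : nceq [::] (ncscale 0 [::]) by [].
  by move=> v; rewrite (goodE _ gA e) (goodE _ gB e) (goodZ _ _ _ gA) (goodZ _ _ _ gB) !mul0r.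
have e : nceq ((a, w) :: p) (ncadd (ncscale a (ncw w)) p).
  by move=> v; rewrite ncoef_add -(nceq_single a w) -ncoef_add.
move=> v; rewrite (goodE _ gA e) (goodE _ gB e) !(goodD _ _ _ gA) !(goodD _ _ _ gB).
by rewrite !(goodZ _ _ _ gA) !(goodZ _ _ _ gB) h IH.
Qed.

Lemma good_Rw v : good (Rw v). Proof. exact: good_ext. Qed.
Lemma good_Rz : good Rz. Proof. by apply: good_add; apply: good_Rw. Qed.
Lemma good_d1 : good d1. Proof. exact: good_ext. Qed.
Lemma good_theta c : good (theta c). Proof. exact: good_ext. Qed.
Lemma good_Hop : good Hop. Proof. exact: good_ext. Qed.
Lemma good_iter c k A : good A -> good (iter k (ad (theta c)) A).
Proof. by move=> gA; elim: k => //= k IH; apply: good_ad => //; apply: good_theta. Qed.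
Lemma good_dn c n : good (dn c n).
Proof. by apply: good_scale; apply: good_iter; apply: good_d1. Qed.
Lemma good_phi c n : good (phi c n).
Proof.
elim: n => [|n IH] /=; first exact: good_id.
apply: good_scale; apply: good_add; first by apply: good_ad => //; apply: good_theta.
apply: good_add; first by apply: good_scale; apply: good_add; apply: good_comp => //; apply: good_Rz.
by apply: good_scale; apply: good_comp => //; apply: good_d1.
Qed.

Definition Nw := locked ncw.
Lemma NwE w : Nw w = ncw w. Proof. by rewrite /Nw -lock. Qed.
Definition Sadd := locked ncadd.
Definition Smul := locked ncmul.
Lemma ncoef_Sadd p q v : ncoef (Sadd p q) v = ncoef p v + ncoef q v.
Proof. by rewrite /Sadd -lock ncoef_add. Qed.

Definition Lw (w0 : word) : op := ext (fun w => ncw (w0 ++ w)).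
Lemma good_Lw w0 : good (Lw w0). Proof. exact: good_ext. Qed.

Lemma ext_Nw f w v : ncoef (ext f (Nw w)) v = ncoef (f w) v.
Proof. by rewrite NwE ncoef_ext big_cons big_nil mul1r addr0. Qed.

Lemma good_wordsN A B : good A -> good B ->
  (forall w, nceq (A (Nw w)) (B (Nw w))) -> forall p, nceq (A p) (B p).
Proof. move=> gA gB h; apply: good_words => // w; rewrite -NwE; exact: h. Qed.

Lemma RwD u p q v : ncoef (Rw u (ncadd p q)) v = ncoef (Rw u p) v + ncoef (Rw u q) v.
Proof. exact: goodD (good_Rw u). Qed.
Lemma RwZ u a p v : ncoef (Rw u (ncscale a p)) v = a * ncoef (Rw u p) v.
Proof. exact: goodZ (good_Rw u). Qed.
Lemma LwD u p q v : ncoef (Lw u (ncadd p q)) v = ncoef (Lw u p) v + ncoef (Lw u q) v.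
Proof. exact: goodD (good_Lw u). Qed.
Lemma LwZ u a p v : ncoef (Lw u (ncscale a p)) v = a * ncoef (Lw u p) v.
Proof. exact: goodZ (good_Lw u). Qed.
Lemma RwN u v w : ncoef (Rw u (Nw w)) v = ncoef (Nw (w ++ u)) v.
Proof. by rewrite ext_Nw NwE. Qed.
Lemma LwN u v w : ncoef (Lw u (Nw w)) v = ncoef (Nw (u ++ w)) v.
Proof. by rewrite ext_Nw NwE. Qed.

Lemma ncmulE p q v : ncoef (ncmul p q) v = ncoef (ext (fun w1 => Lw w1 q) p) v.
Proof.
elim: p => [|s p IH]; first by rewrite /ext /ncoef /= !big_nil.
rewrite /ncmul allpairs_cons ncoef_cat -/(ncmul p q) IH.
rewrite !ncoef_ext big_cons; congr (_ + _).
rewrite /Lw ncoef_ext big_distrr /= /ncoef big_map big_mkcond /=.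
apply: eq_bigr => t _; rewrite big_cons big_nil /=.
by case: (_ == v); rewrite ?mulr1 ?mulr0 ?addr0 ?mulrA.
Qed.
Lemma ncoef_Smul p q v : ncoef (Smul p q) v = ncoef (ext (fun w1 => Lw w1 q) p) v.
Proof. by rewrite /Smul -lock ncmulE. Qed.

Lemma LwRw a u p : nceq (Lw a (Rw u p)) (Rw u (Lw a p)).
Proof.
apply: (good_wordsN (good_comp (good_Lw a) (good_Rw u)) (good_comp (good_Rw u) (good_Lw a))).
move=> w v; rewrite /opcomp (goodE _ (good_Lw a) (fun v => RwN u v w)).
by rewrite (goodE _ (good_Rw u) (fun v => LwN a v w)) !LwN RwN catA.
Qed.

Lemma d1_word_consS a w : d1_word (a :: w) =
  Sadd (Smul (d1_letter a) (Nw w)) (Smul (Nw [:: a]) (d1_word w)).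
Proof. by rewrite /Sadd /Smul -!lock !NwE. Qed.
Lemma d1_letterS a : nceq (d1_letter a) (ncscale (sgn a) (Nw [:: true; false])).
Proof. by rewrite NwE. Qed.
Lemma d1_Nw w : nceq (d1_word w) (d1 (Nw w)).
Proof. by move=> v; rewrite ext_Nw. Qed.

Lemma d1_cons a w : nceq (d1 (Nw (a :: w)))
  (ncadd (ncscale (sgn a) (Nw [:: true, false & w])) (Lw [:: a] (d1 (Nw w)))).
Proof.
move=> v; rewrite ext_Nw d1_word_consS ncoef_Sadd !ncoef_Smul ext_Nw.
rewrite (goodE _ (good_ext _) (d1_letterS a)) (goodZ _ _ _ (good_ext _)) ext_Nw LwN.
by rewrite (goodE _ (good_Lw _) (d1_Nw w)) ncoef_add ncoef_scale.
Qed.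

Lemma ext_nil f v : ncoef (ext f [::]) v = 0.
Proof. by rewrite ncoef_ext big_nil. Qed.
Lemma d1_nil : nceq (d1 (Nw [::])) [::].
Proof. by move=> v; rewrite ext_Nw. Qed.
Ltac wnorm := rewrite ?cat_cons ?cat0s.

Lemma d1_rcons w u : nceq (d1 (Nw (w ++ [:: u])))
  (ncadd (Rw [:: u] (d1 (Nw w))) (ncscale (sgn u) (Nw (w ++ [:: true; false])))).
Proof.
elim: w => [|a w IH] v.
  rewrite d1_cons !ncoef_add !ncoef_scale (goodE _ (good_Lw _) d1_nil).
  rewrite (goodE _ (good_Rw _) d1_nil) !ext_nil; wnorm; qring.
rewrite cat_cons d1_cons !ncoef_add !ncoef_scale (goodE _ (good_Lw _) IH) LwD LwZ.
rewrite LwRw LwN.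
rewrite (goodE _ (good_Rw _) (d1_cons a w)) RwD RwZ RwN; wnorm; qring.
Qed.

Definition hlf : rat := locked (1 / 2%:R).
Lemma hlfE : hlf = 1 / 2%:R. Proof. by rewrite /hlf -lock. Qed.
Definition Sscale := locked ncscale.
Lemma ncoef_Sscale a p v : ncoef (Sscale a p) v = a * ncoef p v.
Proof. by rewrite /Sscale -lock ncoef_scale. Qed.
Lemma theta_word_consS c a w : theta_word c (a :: w) =
      Sadd (Smul (theta_letter a) (Nw w))
        (Sadd (Smul (Nw [:: a]) (theta_word c w))
               (Sscale c (Smul (d1_letter a) (Hop (Nw w))))).
Proof. by rewrite /Sadd /Smul /Sscale -!lock !NwE. Qed.
Lemma theta_letterS a : nceq (theta_letter a)
  (ncscale hlf (ncadd (Nw [:: a; true]) (ncadd (Nw [:: a; false])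
     (ncadd (Nw [:: true; a]) (Nw [:: false; a]))))).
Proof. by rewrite !NwE hlfE. Qed.
Lemma Hop_Nw w : nceq (Hop (Nw w)) (ncscale (size w)%:R (Nw w)).
Proof. by move=> v; rewrite ext_Nw NwE. Qed.
Lemma theta_Nw c w : nceq (theta_word c w) (theta c (Nw w)).
Proof. by move=> v; rewrite ext_Nw. Qed.

Lemma extL_Nw q w0 v : ncoef (ext (fun w1 => Lw w1 q) (Nw w0)) v = ncoef (Lw w0 q) v.
Proof. exact: ext_Nw. Qed.

Lemma theta_cons c a w : nceq (theta c (Nw (a :: w)))
  (ncadd (ncscale hlf (ncadd (Nw [:: a, true & w]) (ncadd (Nw [:: a, false & w])
          (ncadd (Nw [:: true, a & w]) (Nw [:: false, a & w])))))
   (ncadd (Lw [:: a] (theta c (Nw w)))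
          (ncscale (c * sgn a * (size w)%:R) (Nw [:: true, false & w])))).
Proof.
move=> v; rewrite ext_Nw theta_word_consS !ncoef_Sadd ncoef_Sscale !ncoef_Smul extL_Nw.
rewrite (goodE _ (good_ext _) (theta_letterS a)) (goodE _ (good_ext _) (d1_letterS a)).
rewrite !(goodZ _ _ _ (good_ext _)) !(goodD _ _ _ (good_ext _)) !extL_Nw !LwN.
rewrite (goodE _ (good_Lw _) (theta_Nw c w)) (goodE _ (good_Lw _) (Hop_Nw w)) LwZ LwN.
rewrite !ncoef_add !ncoef_scale !ncoef_add; wnorm; qring.
Qed.

Lemma theta_nil c : nceq (theta c (Nw [::])) [::].
Proof. by move=> v; rewrite ext_Nw. Qed.

Lemma theta_rcons c w u : nceq (theta c (Nw (w ++ [:: u])))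
  (ncadd (Rw [:: u] (theta c (Nw w)))
   (ncadd (ncscale hlf (ncadd (Nw (w ++ [:: u; true])) (ncadd (Nw (w ++ [:: u; false]))
          (ncadd (Nw (w ++ [:: true; u])) (Nw (w ++ [:: false; u]))))))
          (ncscale c (Rw [:: u] (d1 (Nw w)))))).
Proof.
elim: w => [|a w IH] v.
  rewrite theta_cons !ncoef_add !ncoef_scale !ncoef_add (goodE _ (good_Lw _) (theta_nil c)).
  rewrite (goodE _ (good_Rw _) (theta_nil c)) (goodE _ (good_Rw _) d1_nil) !ext_nil; wnorm.
  rewrite /= mulr0n; qring.
rewrite cat_cons theta_cons !ncoef_add !ncoef_scale (goodE _ (good_Lw _) IH).
rewrite !LwD !LwZ !LwD !LwRw !LwN.
rewrite (goodE _ (good_Rw _) (theta_cons c a w)) !RwD !RwZ !RwD !RwN.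
rewrite (goodE _ (good_Rw _) (d1_cons a w)) !RwD !RwZ !RwN ?ncoef_add ?ncoef_scale ?ncoef_add.
rewrite size_cat natrD /= mulr1n; wnorm; qring.
Qed.

Lemma RwNq u w : nceq (Rw u (Nw w)) (Nw (w ++ u)).
Proof. move=> v; exact: RwN. Qed.

Definition RR (u : bool) : op := locked (Rw [:: u]).
Definition RZ : op := locked Rz.
Definition D1 : op := locked d1.
Definition Th (c : rat) : op := locked (theta c).
Definition Ph (c : rat) (n : nat) : op := locked (phi c n).
Definition Dn (c : rat) (n : nat) : op := locked (dn c n).
Lemma RRE u : RR u = Rw [:: u]. Proof. by rewrite /RR -lock. Qed.
Lemma RZE : RZ = Rz. Proof. by rewrite /RZ -lock. Qed.
Lemma D1E : D1 = d1. Proof. by rewrite /D1 -lock. Qed.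
Lemma ThE c : Th c = theta c. Proof. by rewrite /Th -lock. Qed.
Lemma PhE c n : Ph c n = phi c n. Proof. by rewrite /Ph -lock. Qed.
Lemma DnE c n : Dn c n = dn c n. Proof. by rewrite /Dn -lock. Qed.
Lemma good_RR u : good (RR u). Proof. rewrite RRE; exact: good_Rw. Qed.
Lemma good_RZ : good RZ. Proof. rewrite RZE; exact: good_Rz. Qed.
Lemma good_D1 : good D1. Proof. rewrite D1E; exact: good_d1. Qed.
Lemma good_Th c : good (Th c). Proof. rewrite ThE; exact: good_theta. Qed.
Lemma good_Ph c n : good (Ph c n). Proof. rewrite PhE; exact: good_phi. Qed.
Lemma good_Dn c n : good (Dn c n). Proof. rewrite DnE; exact: good_dn. Qed.

Lemma RZ_split p v : ncoef (RZ p) v = ncoef (RR true p) v + ncoef (RR false p) v.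
Proof. by rewrite RZE !RRE /Rz /opadd ncoef_add. Qed.

Lemma RxyE p : nceq (Rw [:: true; false] p) (RR false (RR true p)).
Proof.
rewrite !RRE; apply: (good_wordsN (good_Rw _) (good_comp (good_Rw _) (good_Rw _))) => w v.
by rewrite /opcomp RwN (goodE _ (good_Rw _) (RwNq _ _)) RwN -catA.
Qed.

Lemma D1R u p : nceq (D1 (RR u p))
  (ncadd (RR u (D1 p)) (ncscale (sgn u) (RR false (RR true p)))).
Proof.
move=> v; rewrite ncoef_add ncoef_scale -(RxyE p) !RRE D1E.
pose A := opcomp d1 (Rw [:: u]).
pose B := opadd (opcomp (Rw [:: u]) d1) (opscale (sgn u) (Rw [:: true; false])).
have gA : good A by apply: good_comp; [apply: good_d1 | apply: good_Rw].
have gB : good B.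
  by apply: good_add; [apply: good_comp; [apply: good_Rw | apply: good_d1] |
                       apply: good_scale; apply: good_Rw].
have := @good_wordsN A B gA gB; rewrite /A /B /opcomp /opadd /opscale => h.
rewrite h ?ncoef_add ?ncoef_scale // => w x.
rewrite (goodE _ good_d1 (RwNq _ _)) d1_rcons !ncoef_add !ncoef_scale RwN //.
Qed.

Lemma ThR c u p : nceq (Th c (RR u p))
  (ncadd (RR u (Th c p))
   (ncadd (ncscale hlf (ncadd (RZ (RR u p)) (RR u (RZ p))))
          (ncscale c (RR u (D1 p))))).
Proof.
move=> v; rewrite !ncoef_add !ncoef_scale !ncoef_add !RRE RZE D1E ThE.
pose A := opcomp (theta c) (Rw [:: u]).
pose B := opadd (opcomp (Rw [:: u]) (theta c))
   (opadd (opscale hlf (opadd (opcomp Rz (Rw [:: u])) (opcomp (Rw [:: u]) Rz)))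
          (opscale c (opcomp (Rw [:: u]) d1))).
have gA : good A by apply: good_comp; [apply: good_theta | apply: good_Rw].
have gB : good B.
  apply: good_add; first by apply: good_comp; [apply: good_Rw | apply: good_theta].
  apply: good_add; apply: good_scale; last by apply: good_comp; [apply: good_Rw | apply: good_d1].
  by apply: good_add; apply: good_comp; (apply: good_Rz || apply: good_Rw).
have := @good_wordsN A B gA gB; rewrite /A /B /opcomp /opadd /opscale => h.
rewrite h ?ncoef_add ?ncoef_scale ?ncoef_add // => w x.
rewrite (goodE _ (good_theta c) (RwNq _ _)) theta_rcons !ncoef_add !ncoef_scale !ncoef_add.
rewrite /Rz /opadd RwD !(goodE _ (good_Rw _) (RwNq _ _)) !RwN -!catA /=; qring.
Qed.

#[global] Instance nceq_Equiv : Equivalence nceq.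
Proof. split; [exact: nceq_refl | exact: nceq_sym | exact: nceq_trans]. Qed.
Lemma goodN A p q : good A -> nceq p q -> nceq (A p) (A q).
Proof. by case=> h _ _; apply: h. Qed.
#[global] Instance ncoef_Proper : Proper (nceq ==> eq ==> eq) ncoef.
Proof. by move=> p q e v w ->; apply: e. Qed.
#[global] Instance ncadd_Proper : Proper (nceq ==> nceq ==> nceq) ncadd.
Proof. by move=> p q e p' q' e' v; rewrite !ncoef_add e e'. Qed.
#[global] Instance ncscale_Proper a : Proper (nceq ==> nceq) (ncscale a).
Proof. by move=> p q e v; rewrite !ncoef_scale e. Qed.
#[global] Instance RR_Proper u : Proper (nceq ==> nceq) (RR u).
Proof. move=> p q e; exact: goodN (good_RR u) e. Qed.
#[global] Instance RZ_Proper : Proper (nceq ==> nceq) RZ.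
Proof. move=> p q e; exact: goodN good_RZ e. Qed.
#[global] Instance D1_Proper : Proper (nceq ==> nceq) D1.
Proof. move=> p q e; exact: goodN good_D1 e. Qed.
#[global] Instance Ph_Proper c m : Proper (nceq ==> nceq) (Ph c m).
Proof. move=> p q e; exact: goodN (good_Ph c m) e. Qed.
#[global] Instance Th_Proper c : Proper (nceq ==> nceq) (Th c).
Proof. move=> p q e; exact: goodN (good_Th c) e. Qed.
#[global] Instance Dn_Proper c n : Proper (nceq ==> nceq) (Dn c n).
Proof. move=> p q e; exact: goodN (good_Dn c n) e. Qed.

Lemma goodDq A p q : good A -> nceq (A (ncadd p q)) (ncadd (A p) (A q)).
Proof. by case. Qed.
Lemma goodZq A a p : good A -> nceq (A (ncscale a p)) (ncscale a (A p)).
Proof. by case. Qed.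
Lemma RRDq u p q : nceq (RR u (ncadd p q)) (ncadd (RR u p) (RR u q)).
Proof. exact: goodDq (good_RR u). Qed.
Lemma RRZq u a p : nceq (RR u (ncscale a p)) (ncscale a (RR u p)).
Proof. exact: goodZq (good_RR u). Qed.
Lemma RZDq p q : nceq (RZ (ncadd p q)) (ncadd (RZ p) (RZ q)).
Proof. exact: goodDq good_RZ. Qed.
Lemma RZZq a p : nceq (RZ (ncscale a p)) (ncscale a (RZ p)).
Proof. exact: goodZq good_RZ. Qed.
Lemma D1Dq p q : nceq (D1 (ncadd p q)) (ncadd (D1 p) (D1 q)).
Proof. exact: goodDq good_D1. Qed.
Lemma D1Zq a p : nceq (D1 (ncscale a p)) (ncscale a (D1 p)).
Proof. exact: goodZq good_D1. Qed.
Lemma ThDq c p q : nceq (Th c (ncadd p q)) (ncadd (Th c p) (Th c q)).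
Proof. exact: goodDq (good_Th c). Qed.
Lemma ThZq c a p : nceq (Th c (ncscale a p)) (ncscale a (Th c p)).
Proof. exact: goodZq (good_Th c). Qed.
Lemma PhDq c m p q : nceq (Ph c m (ncadd p q)) (ncadd (Ph c m p) (Ph c m q)).
Proof. exact: goodDq (good_Ph c m). Qed.
Lemma PhZq c m a p : nceq (Ph c m (ncscale a p)) (ncscale a (Ph c m p)).
Proof. exact: goodZq (good_Ph c m). Qed.
Lemma DnDq c n p q : nceq (Dn c n (ncadd p q)) (ncadd (Dn c n p) (Dn c n q)).
Proof. exact: goodDq (good_Dn c n). Qed.
Lemma DnZq c n a p : nceq (Dn c n (ncscale a p)) (ncscale a (Dn c n p)).
Proof. exact: goodZq (good_Dn c n). Qed.

Ltac linq := repeat first [ setoid_rewrite RRDq | setoid_rewrite RRZq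
  | setoid_rewrite RZDq | setoid_rewrite RZZq | setoid_rewrite D1Dq | setoid_rewrite D1Zq
  | setoid_rewrite ThDq | setoid_rewrite ThZq | setoid_rewrite PhDq | setoid_rewrite PhZq
  | setoid_rewrite DnDq | setoid_rewrite DnZq ].
Ltac fin := let v := fresh "v" in move=> v; repeat rewrite ?ncoef_add ?ncoef_scale; qring.

Lemma sgnT : sgn true = 1. Proof. by []. Qed.
Lemma sgnF : sgn false = -1. Proof. by []. Qed.

Lemma Ph0 c p : Ph c 0 p = p. Proof. by rewrite PhE. Qed.
Lemma PhS c m p : nceq (Ph c m.+1 p)
  (ncscale (1 / m.+1%:R)
    (ncadd (ncadd (Th c (Ph c m p)) (ncscale (-1) (Ph c m (Th c p))))
      (ncadd (ncscale hlf (ncadd (RZ (Ph c m p)) (Ph c m (RZ p))))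
             (ncscale c (D1 (Ph c m p)))))).
Proof. by rewrite !PhE ThE RZE D1E hlfE. Qed.

Lemma Dn1 c p : nceq (Dn c 1 p) (D1 p).
Proof. by move=> v; rewrite DnE D1E /dn /opscale ncoef_scale /= divr1 mul1r. Qed.

Lemma DnS c m p : nceq (Dn c m.+2 p)
  (ncscale (1 / m.+1%:R) (ncadd (Th c (Dn c m.+1 p)) (ncscale (-1) (Dn c m.+1 (Th c p))))).
Proof.
move=> v; rewrite !DnE ThE /dn /opscale /= -/(iter m (ad (theta c)) d1).
have gX := good_iter c m good_d1.
move: gX; move: (iter m (ad (theta c)) d1) => X gX.
rewrite /ad /opsub /opcomp !ncoef_scale !ncoef_add !ncoef_scale.
rewrite (goodZ _ _ _ (good_theta c)) factS natrM invfM !div1r.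
qring.
Qed.

Definition CC c n := forall u p, nceq (Dn c n (RR u p))
  (ncadd (RR u (Dn c n p)) (ncscale (sgn u) (RR false (Ph c n.-1 (RR true p))))).
Definition ZZ c n := forall p, nceq (Dn c n (RZ p)) (RZ (Dn c n p)).
Definition KK c n := forall p, nceq (D1 (Dn c n p)) (Dn c n (D1 p)).

Lemma RZS p : nceq (RZ p) (ncadd (RR true p) (RR false p)).
Proof. by move=> v; rewrite RZ_split ncoef_add. Qed.

Lemma CZ c n : CC c n -> ZZ c n.
Proof.
move=> C p; rewrite /CC in C; setoid_rewrite RZS; linq; setoid_rewrite C; linq.
rewrite sgnT sgnF; fin.
Qed.

Lemma C1 c : CC c 1.
Proof.
move=> u p /=; rewrite Ph0; setoid_rewrite Dn1; exact: D1R.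
Qed.

Lemma K1 c : KK c 1.
Proof. by move=> p; setoid_rewrite Dn1. Qed.




Lemma C_step c m : CC c m.+1 -> KK c m.+1 -> CC c m.+2.
Proof.
move=> C K; have Z := CZ C; rewrite /CC /KK /ZZ in C K Z |- * => u p.
change (m.+2.-1) with m.+1; change (m.+1.-1) with m in C.
setoid_rewrite (DnS c m). setoid_rewrite (PhS c m). linq.
repeat first [ setoid_rewrite (ThR c) | setoid_rewrite C | setoid_rewrite Z
             | setoid_rewrite <- K | progress linq ].
fin.
Qed.



Definition ECg (A : op) := forall p, nceq (D1 (A p))
  (ncadd (RZ (A p)) (ncadd (A (D1 p)) (ncscale (-1) (A (RZ p))))).

Lemma good_nil A : good A -> nceq (A [::]) [::].
Proof.
move=> gA; have e : nceq [::] (ncscale 0 [::]) by [].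
by move=> v; rewrite (goodE _ gA e) (goodZ _ _ _ gA) mul0r ncoef_nil.
Qed.

Lemma Dn_nil c n : nceq (Dn c n (Nw [::])) [::].
Proof.
rewrite DnE /dn /opscale; move=> v; rewrite ncoef_scale.
suff h : nceq (iter n.-1 (ad (theta c)) d1 (Nw [::])) [::] by rewrite h ncoef_nil mulr0.
move: (n.-1) => k; elim: k => [|k IH] x /=; first by rewrite ext_Nw.
rewrite /ad /opsub /opcomp ncoef_add ncoef_scale.
rewrite (goodE _ (good_theta c) IH) (goodE _ (good_iter c k good_d1) (theta_nil c)).
by rewrite !(good_nil (good_theta c)) (good_nil (good_iter c k good_d1)) !ncoef_nil mulr0 addr0.
Qed.

Lemma Nw_rcons w u : nceq (Nw (rcons w u)) (RR u (Nw w)).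
Proof. by move=> v; rewrite -cats1 RRE RwN. Qed.

Lemma K_step c m : CC c m.+1 -> ECg (Ph c m) -> KK c m.+1.
Proof.
move=> C E; rewrite /CC /ECg in C E; change (m.+1.-1) with m in C.
apply: (good_wordsN (good_comp good_D1 (good_Dn c m.+1)) (good_comp (good_Dn c m.+1) good_D1)).
rewrite /opcomp; elim/last_ind => [|w u IH].
  setoid_rewrite (Dn_nil c m.+1); setoid_rewrite (good_nil good_D1).
  have -> : nceq (D1 (Nw [::])) [::] by rewrite D1E; exact: d1_nil.
  by rewrite (good_nil (good_Dn c m.+1)).
setoid_rewrite Nw_rcons.
repeat first [ setoid_rewrite C | setoid_rewrite D1R | setoid_rewrite IH
             | setoid_rewrite E | progress linq ].
repeat setoid_rewrite RZS; linq.
rewrite sgnT sgnF; fin.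
Qed.



Inductive InAlg (c : rat) (m : nat) : op -> Prop :=
 | IA_id : InAlg c m (fun p => p)
 | IA_RZ : InAlg c m RZ
 | IA_Dn k : (0 < k <= m)%N -> InAlg c m (Dn c k)
 | IA_add A B : InAlg c m A -> InAlg c m B -> InAlg c m (opadd A B)
 | IA_scale a A : InAlg c m A -> InAlg c m (opscale a A)
 | IA_comp A B : InAlg c m A -> InAlg c m B -> InAlg c m (opcomp A B)
 | IA_eq A B : InAlg c m A -> good B -> (forall p, nceq (A p) (B p)) -> InAlg c m B.

Lemma IA_good c m A : InAlg c m A -> good A.
Proof.
elim=> [|||A0 B0 _ gA _ gB|a A0 _ gA|A0 B0 _ gA _ gB|A0 B0 _ _ gB _].
- exact: good_id.
- exact: good_RZ.
- by move=> *; apply: good_Dn.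
- exact: good_add.
- exact: good_scale.
- exact: good_comp.
- exact: gB.
Qed.

Lemma IA_mono c m A : InAlg c m A -> InAlg c m.+1 A.
Proof.
elim=> [|||A0 B0 _ gA _ gB|a A0 _ gA|A0 B0 _ gA _ gB|A0 B0 _ h gB e].
- exact: IA_id.
- exact: IA_RZ.
- by move=> k /andP[k0 km]; apply: IA_Dn; rewrite k0 (leq_trans km).
- exact: IA_add.
- exact: IA_scale.
- exact: IA_comp.
- exact: IA_eq h gB e.
Qed.

Lemma D1RZ p : nceq (D1 (RZ p)) (RZ (D1 p)).
Proof.
setoid_rewrite RZS; linq; setoid_rewrite D1R; linq; rewrite sgnT sgnF; fin.
Qed.

Lemma IA_EC c m A : (forall k, (0 < k <= m)%N -> KK c k /\ ZZ c k) ->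
  InAlg c m A -> ECg A.
Proof.
move=> hk; elim=> [|||A0 B0 _ EA _ EB|a A0 _ EA|A0 B0 hA EA hB EB|A0 B0 hA EA gB e].
- move=> p; fin.
- move=> p; setoid_rewrite D1RZ; fin.
- move=> k /hk [K Z] p; rewrite /KK /ZZ in K Z; setoid_rewrite K; setoid_rewrite Z; fin.
- move=> p; rewrite /opadd; setoid_rewrite D1Dq; setoid_rewrite (EA p);
    setoid_rewrite (EB p); linq; fin.
- move=> p; rewrite /opscale; setoid_rewrite D1Zq; setoid_rewrite (EA p); linq; fin.
- move=> p v; have gA := IA_good hA.
  rewrite /opcomp EA !ncoef_add !ncoef_scale (goodE _ gA (EB p)).
  rewrite !(goodD _ _ _ gA) !(goodZ _ _ _ gA) ?ncoef_add.
  qring.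
- move=> p v.
  rewrite -(goodE _ good_D1 (e p)) EA !ncoef_add !ncoef_scale.
  by rewrite (goodE _ good_RZ (e p)) e e.
Qed.

Lemma ThRZ c p : nceq (Th c (RZ p)) (ncadd (RZ (Th c p)) (ncadd (ncscale hlf (RZ (RZ p)))
   (ncadd (ncscale hlf (RZ (RZ p))) (ncscale c (RZ (D1 p)))))).
Proof.
repeat setoid_rewrite RZS; linq; repeat setoid_rewrite (ThR c); linq.
repeat setoid_rewrite RZS; linq; fin.
Qed.

Lemma ThDn c k p : nceq (ad (Th c) (Dn c k.+1) p) (ncscale (k.+1%:R) (Dn c k.+2 p)).
Proof.
move=> v; rewrite /ad /opsub /opcomp ncoef_add !ncoef_scale (DnS c k p) ncoef_scale.
by rewrite ncoef_add ncoef_scale mulrA div1r mulfV ?mul1r // pnatr_eq0.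
Qed.

Lemma D1_alg c m : InAlg c m.+1 D1.
Proof. apply: (IA_eq (IA_Dn c (m:=m.+1) (k:=1) _) good_D1) => //; exact: Dn1. Qed.

Lemma IA_theta c m A : InAlg c m A -> InAlg c m.+1 (ad (Th c) A).
Proof.
have gT := good_Th c.
elim=> [|||A0 B0 hA IA hB IB|a A0 hA IA|A0 B0 hA IA hB IB|A0 B0 hA IA gB e].
- apply: (IA_eq (IA_scale 0 (IA_id c m.+1))); first by apply: good_ad => //; exact: good_id.
  by move=> p; rewrite /ad /opsub /opcomp /opscale; fin.
- apply: (IA_eq (A := opadd (opscale hlf (opcomp RZ RZ))
           (opadd (opscale hlf (opcomp RZ RZ)) (opscale c (opcomp RZ D1))))).
  + apply: IA_add; first by apply: IA_scale; apply: IA_comp; apply: IA_RZ.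
    apply: IA_add; first by apply: IA_scale; apply: IA_comp; apply: IA_RZ.
    by apply: IA_scale; apply: IA_comp; [apply: IA_RZ | apply: D1_alg].
  + by apply: good_ad => //; exact: good_RZ.
  + move=> p; rewrite /ad /opsub /opcomp /opscale /opadd; setoid_rewrite ThRZ; fin.
- case=> [//|k] /andP[_ km].
  apply: (IA_eq (A := opscale (k.+1)%:R (Dn c k.+2))).
  + by apply: IA_scale; apply: IA_Dn.
  + by apply: good_ad => //; exact: good_Dn.
  + by move=> p; symmetry; apply: ThDn.
- apply: (IA_eq (IA_add IA IB)); first by apply: good_ad => //; apply: good_add; [exact: (IA_good hA) | exact: (IA_good hB)].
  move=> p; rewrite /ad /opsub /opcomp /opadd; setoid_rewrite ThDq; fin.
- apply: (IA_eq (IA_scale a IA)); first by apply: good_ad => //; apply: good_scale; exact: (IA_good hA).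
  move=> p; rewrite /ad /opsub /opcomp /opscale; setoid_rewrite ThZq; fin.
- have gA := IA_good hA; have gB := IA_good hB.
  apply: (IA_eq (IA_add (IA_comp IA (IA_mono hB)) (IA_comp (IA_mono hA) IB))).
    by apply: good_ad => //; apply: good_comp.
  move=> p v; rewrite /ad /opsub /opcomp /opadd !ncoef_add !ncoef_scale.
  rewrite !(goodD _ _ _ gA) !(goodZ _ _ _ gA); qring.
- have gA := IA_good hA.
  apply: (IA_eq IA); first by apply: good_ad.
  move=> p v; rewrite /ad /opsub /opcomp !ncoef_add !ncoef_scale.
  by rewrite (goodE _ gT (e p)) e.
Qed.

Lemma IA_phi c m : InAlg c m (Ph c m).
Proof.
elim: m => [|m IH].
  apply: (IA_eq (IA_id c 0) (good_Ph c 0)) => p; by rewrite Ph0.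
apply: (IA_eq (A := opscale (1 / m.+1%:R) (opadd (ad (Th c) (Ph c m))
   (opadd (opscale hlf (opadd (opcomp RZ (Ph c m)) (opcomp (Ph c m) RZ)))
          (opscale c (opcomp D1 (Ph c m))))))).
- apply: IA_scale; apply: IA_add; first exact: IA_theta.
  have IH' := IA_mono IH.
  apply: IA_add; apply: IA_scale; last by apply: IA_comp => //; exact: D1_alg.
  by apply: IA_add; apply: IA_comp => //; apply: IA_RZ.
- exact: good_Ph.
- by move=> p; symmetry; apply: PhS.
Qed.


Lemma main_ind c n : CC c n.+1 /\ (forall k, (0 < k <= n.+1)%N -> KK c k /\ ZZ c k).
Proof.
elim: n => [|m [C hk]].
  split; first exact: C1.
  move=> k /andP[k0 k1]; have -> : k = 1%N by apply/eqP; rewrite eqn_leq k1 k0.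
  by split; [exact: K1 | exact: CZ (C1 c)].
have K : KK c m.+1 by case: (hk m.+1); rewrite ?leqnn.
have C2 := C_step C K.
have E : ECg (Ph c m.+1) := IA_EC hk (IA_phi c m.+1).
have K2 := K_step C2 E.
split => // k /andP[k0 k2]; rewrite leq_eqVlt in k2; case/orP: k2 => [/eqP -> | k1].
  by split => //; exact: CZ C2.
by apply: hk; rewrite k0.
Qed.

Theorem mainTheorem6 (n : nat) (c : rat) : (1 <= n)%N ->
  (forall (w : ncpoly) (u : bool),
     nceq (dn c n (Rw [:: u] w))
          (ncadd (Rw [:: u] (dn c n w))
                 (ncscale (sgn u) (Rw [:: false] (phi c n.-1 (Rw [:: true] w)))))) /\
  (forall w : ncpoly, nceq (dn c n (Rz w)) (Rz (dn c n w))).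
Proof.
case: n => // n _; have [C _] := main_ind c n; have Z := CZ C.
split.
- by move=> w u; have := C u w; rewrite DnE PhE !RRE.
- by move=> w; have := Z w; rewrite DnE RZE.
Qed.
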